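(* Consider a Moksha-Patam board with a chute-barrier of $\lambda\ge 6$ chutes whose entrances are the cells $M+1,M+2,\dots,M+\lambda$. Set $m_1=M+1$ and let $m_2$ be the lowest exit among the chutes of this chute-barrier. Inductively, for $i\ge 2$, let $m_{i+1}$ be the lowest exit among the chutes whose entrance lies in $\{m_i+1,m_i+2,\dots,m_{i-1}-1\}$, or $m_{i+1}=m_i$ if there is no such chute or if this lowest exit exceeds $m_i$. Let $m=\min\{m_i: i\in\mathbb N\}$ and $C=\{m,m+1,\dots,M\}$. Then $C$ is not closed if and only if there is a ladder whose entrance $\ell$ lies in $C$ and whose exit $L$ satisfies $L>M+\lambda$.
   Context: A Moksha-Patam board consists of the cells $1,\dots,100$ together with a finite set of components; a component is an ordered pair $(a,b)$ of distinct cells, $a$ being its entrance and $b$ its exit; it is a ladder if $a<b$ and a chute if $a>b$. Conventions: distinct components have distinct entrances; no cell is both an entrance and an exit; cells $1$ and $100$ are neither entrances nor exits (components may share exits). The associated Markov chain has state space $\{1,\dots,100\}$ and transition probabilities defined as follows: $p_{100,100}=1$; for $i<100$ and each die value $d\in\{1,\dots,6\}$ (each with probability $1/6$), if $i+d>100$ the chain stays at $i$; otherwise, with $j=i+d$, the chain moves to $b$ if $j$ is the entrance of a component $(j,b)$ and to $j$ otherwise. A set $C$ of states is closed if $p_{ij}=0$ for all $i\in C$, $j\notin C$. A chute-barrier is a collection of six or more chutes whose entrances are consecutive cells. *)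

(* Defs.v *)
From mathcomp Require Import all_boot all_order all_algebra.
Set Implicit Arguments. Unset Strict Implicit. Unset Printing Implicit Defensive.
Import GRing.Theory Num.Theory.

(* A board is a finite list of components (a, b) = (entrance, exit). *)
Definition board := seq (nat * nat).

Definition is_cell (x : nat) : bool := (1 <= x <= 100)%N.
Definition entrances (s : board) : seq nat := map fst s.
Definition exits (s : board) : seq nat := map snd s.

Definition valid_board (s : board) : Prop :=
  [/\ forall c, c \in s -> [/\ is_cell c.1, is_cell c.2 & c.1 != c.2],
      uniq (entrances s),
      forall x, x \in entrances s -> x \notin exits s,
      (1 \notin entrances s) && (1 \notin exits s)
    & (100 \notin entrances s) && (100 \notin exits s)].

Definition is_ladder (c : nat * nat) : bool := (c.1 < c.2)%N.
Definition is_chute (c : nat * nat) : bool := (c.2 < c.1)%N.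

Definition dest (s : board) (j : nat) : nat :=
  if [seq c <- s | c.1 == j] is c :: _ then c.2 else j.

Definition target (s : board) (i d : nat) : nat :=
  if (100 < i + d)%N then i else dest s (i + d).

Definition trans (s : board) (i j : nat) : rat :=
  (if i == 100 then (if j == 100 then 1 else 0)
   else \sum_(1 <= d < 7) (6%:R)^-1 * (if target s i d == j then 1 else 0))%R.

Definition closed_set (s : board) (C : pred nat) : Prop :=
  forall i j, is_cell i -> is_cell j -> i \in C -> j \notin C -> trans s i j = 0%R.

Definition lowest_exit (s : board) (lo hi : nat) : option nat :=
  let xs := [seq c.2 | c <- s & [&& is_chute c, lo <= c.1 & c.1 <= hi]%N] in
  if xs is x :: _ then Some (foldr minn x xs) else None.

(* m_{i+1} from m_i (= a) and m_{i-1} (= b), for i >= 2. *)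
Definition next_m (s : board) (a b : nat) : nat :=
  match lowest_exit s a.+1 b.-1 with
  | Some e => if (a < e)%N then a else e
  | None => a
  end.

(* mpair s M lam k = (m_{k+1}, m_{k+2}). *)
Fixpoint mpair (s : board) (M lam : nat) (k : nat) : nat * nat :=
  match k with
  | 0 => (M.+1, odflt M.+1 (lowest_exit s M.+1 (M + lam)))
  | k'.+1 => let p := mpair s M lam k' in (p.2, next_m s p.2 p.1)
  end.

(* mseq s M lam k = m_{k+1} *)
Definition mseq (s : board) (M lam : nat) (k : nat) : nat := (mpair s M lam k).1.

(* Main.v *)
Require Import Defs.
From mathcomp Require Import all_boot all_order all_algebra.
From mathcomp Require Import zify ring lra.
From Stdlib Require Import Classical_Prop.
Set Implicit Arguments. Unset Strict Implicit. Unset Printing Implicit Defensive.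

Lemma foldr_minn_le x xs y : y \in xs -> (foldr minn x xs <= y)%N.
Proof.
elim: xs => [|z t IH] //=; rewrite inE => /orP[/eqP->|yt].
  exact: geq_minl.
exact: leq_trans (geq_minr _ _) (IH yt).
Qed.

Lemma foldr_minn_mem x xs : foldr minn x xs \in x :: xs.
Proof.
elim: xs => [|z t IH] /=; first by rewrite inE.
rewrite {1}/minn; case: ifP => _; first by rewrite !inE eqxx orbT.
by move: IH; rewrite !inE => /orP[->|->] //; rewrite !orbT.
Qed.

Lemma lowest_exit_lb s lo hi e c : lowest_exit s lo hi = Some e ->
  c \in s -> is_chute c -> (lo <= c.1 <= hi)%N -> (e <= c.2)%N.
Proof.
rewrite /lowest_exit => E cs ch r.
have cx : c.2 \in [seq c.2 | c <- s & [&& is_chute c, lo <= c.1 & c.1 <= hi]%N].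
  by apply: map_f; rewrite mem_filter ch r cs.
move: E cx; case: [seq _ | _ <- _ & _] => [|x t] // [<-] cx.
exact: (foldr_minn_le x cx).
Qed.

Lemma lowest_exit_exit s lo hi e : lowest_exit s lo hi = Some e -> e \in exits s.
Proof.
rewrite /lowest_exit.
have sub : {subset [seq c.2 | c <- s & [&& is_chute c, lo <= c.1 & c.1 <= hi]%N] <= exits s}.
  move=> y /mapP[c]; rewrite mem_filter => /andP[_ cs] ->; exact: map_f.
move: sub; case: [seq _ | _ <- _ & _] => [|x t] // sub [<-].
have H : foldr minn x (x :: t) \in x :: t.
  by have := foldr_minn_mem x (x :: t); rewrite inE => /orP[/eqP->|//]; rewrite inE eqxx.
exact: (sub _ H).
Qed.

Lemma lowest_exit_none s lo hi c : lowest_exit s lo hi = None ->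
  c \in s -> is_chute c -> (lo <= c.1 <= hi)%N -> False.
Proof.
rewrite /lowest_exit => E cs ch r.
have cx : c.2 \in [seq c.2 | c <- s & [&& is_chute c, lo <= c.1 & c.1 <= hi]%N].
  by apply: map_f; rewrite mem_filter ch r cs.
by move: E cx; case: [seq _ | _ <- _ & _].
Qed.

Lemma next_m_le s a b : (next_m s a b <= a)%N.
Proof.
rewrite /next_m; case: lowest_exit => [e|] //; by case: ifP => // /negbT; rewrite -leqNgt.
Qed.

Lemma next_m_lb s a b j c : (j, c) \in s -> (c < j)%N -> (a < j <= b.-1)%N ->
  (next_m s a b <= c)%N.
Proof.
move=> js cj r; rewrite /next_m; case E: lowest_exit => [e|].
  have := lowest_exit_lb E js cj r => /= ec.
  case: ifP => // ae; exact: ltnW (leq_trans ae ec).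
by case: (lowest_exit_none E js cj r).
Qed.

Lemma next_m_exit s a b : next_m s a b = a \/ next_m s a b \in exits s.
Proof.
rewrite /next_m; case E: lowest_exit => [e|]; last by left.
case: ifP => _; first by left.
by right; exact: lowest_exit_exit E.
Qed.

Lemma uniq_ent s k x y : uniq (entrances s) -> (k, x) \in s -> (k, y) \in s -> x = y.
Proof.
rewrite /entrances; elim: s => [|c t IH] //= /andP[nc ut].
rewrite !inE => /orP[/eqP ex|xt] /orP[/eqP ey|yt].
- by rewrite -ex in ey; case: ey.
- by move: nc; rewrite -ex /=; move/negP; case; apply/mapP; exists (k, y).
- by move: nc; rewrite -ey /=; move/negP; case; apply/mapP; exists (k, x).
- exact: IH.
Qed.

Lemma dest_cases s j : (j \notin entrances s /\ dest s j = j) \/ (j, dest s j) \in s.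
Proof.
rewrite /dest; have : {subset [seq c <- s | c.1 == j] <= s}.
  by move=> c; rewrite mem_filter => /andP[].
have : all (fun c => c.1 == j) [seq c <- s | c.1 == j] by apply: filter_all.
case E: [seq c <- s | c.1 == j] => [|c t].
  left; split => //; apply/negP => /mapP[c cs cj].
  have : c \in [seq c <- s | c.1 == j] by rewrite mem_filter cs cj eqxx.
  by rewrite E.
move=> /= /andP[/eqP cj _] sub; right.
have := sub c; rewrite inE eqxx => /(_ isT); by rewrite -cj; case: c {E sub cj}.
Qed.

Lemma dest_eq s j x : uniq (entrances s) -> (j, x) \in s -> dest s j = x.
Proof.
move=> u js; case: (dest_cases s j) => [[nj _]|h]; last exact: uniq_ent u h js.
by case/negP: nj; apply/mapP; exists (j, x).
Qed.

Definition barrier (s : board) M lam :=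
  forall k, (M.+1 <= k <= M + lam)%N -> exists b, (k, b) \in s /\ (b < k)%N.

Lemma exit_le s M lam b : valid_board s -> barrier s M lam ->
  b \in exits s -> (b <= M + lam)%N -> (b <= M)%N.
Proof.
case=> _ _ V3 _ _ bar be bl; rewrite leqNgt; apply/negP => Mb.
have [b' [bs _]] := bar b ltac:(by rewrite Mb bl).
have : b \in entrances s by apply/mapP; exists (b, b').
by move/V3; rewrite be.
Qed.

Lemma mseq1_prop s M lam : (6 <= lam)%N -> barrier s M lam ->
  lowest_exit s M.+1 (M + lam) = Some (mseq s M lam 1) /\ (mseq s M lam 1 <= M)%N.
Proof.
move=> hl bar.
have [b [bs bl]] := bar M.+1 ltac:(apply/andP; split => //; lia).
rewrite /mseq /=; case E: lowest_exit => [e|]; last first.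
  by case: (lowest_exit_none E bs bl) => /=; apply/andP; split => //; lia.
split => //=; have := lowest_exit_lb E bs bl => /=.
have -> : (M.+1 <= M.+1 <= M + lam)%N by apply/andP; split => //; lia.
by move=> /(_ isT) eb; lia.
Qed.

Lemma mseq_exit s M lam k : (6 <= lam)%N -> barrier s M lam ->
  mseq s M lam k.+1 \in exits s.
Proof.
move=> hl bar; elim: k => [|k IH].
  by have [E _] := mseq1_prop hl bar; exact: lowest_exit_exit E.
change (next_m s (mseq s M lam k.+1) (mseq s M lam k) \in exits s).
by case: (next_m_exit s (mseq s M lam k.+1) (mseq s M lam k)) => [->|].
Qed.

Lemma mseq_dec s M lam k : (6 <= lam)%N -> barrier s M lam ->
  (mseq s M lam k.+1 <= mseq s M lam k)%N.
Proof.
move=> hl bar; case: k => [|k].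
  by have [_ h] := mseq1_prop hl bar; change (mseq s M lam 1 <= M.+1)%N; lia.
exact: next_m_le.
Qed.

Lemma mcover s M lam k : valid_board s -> (6 <= lam)%N -> barrier s M lam ->
  forall j b, (j, b) \in s -> (b < j)%N -> (mseq s M lam k.+1 < j <= M + lam)%N ->
  (mseq s M lam k.+2 <= b)%N.
Proof.
move=> V hl bar; elim: k => [|k IH] j b js bj /andP[lj jh].
  have [E h1] := mseq1_prop hl bar.
  change (next_m s (mseq s M lam 1) M.+1 <= b)%N.
  case: (leqP j M) => jM.
    apply: next_m_lb js bj _; apply/andP; split => //.
  have := lowest_exit_lb E js bj => /=.
  have -> : (M.+1 <= j <= M + lam)%N by apply/andP; split.
  move=> /(_ isT) eb; exact: leq_trans (next_m_le _ _ _) eb.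
change (next_m s (mseq s M lam k.+2) (mseq s M lam k.+1) <= b)%N.
case: (ltngtP (mseq s M lam k.+1) j) => h.
- apply: leq_trans (next_m_le _ _ _) _; apply: IH js bj _; lia.
- apply: next_m_lb js bj _; apply/andP; split => //; lia.
- case: V => _ _ V3 _ _.
  have : j \in entrances s by apply/mapP; exists (j, b).
  by move/V3; rewrite -h mseq_exit.
Qed.
Unset Implicit Arguments.
Import GRing.Theory Num.Theory.

Theorem mainTheorem8 (s : board) (M lam : nat) :
  valid_board s ->
  (6 <= lam)%N ->
  (forall k, (M.+1 <= k <= M + lam)%N -> exists b, (k, b) \in s /\ (b < k)%N) ->
  forall m : nat,
    (exists i, mseq s M lam i = m) ->
    (forall i, (m <= mseq s M lam i)%N) ->
    let C : pred nat := fun x => (m <= x <= M)%N in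
    ~ closed_set s C <->
    exists l L, [/\ (l, L) \in s, (l < L)%N, C l & (M + lam < L)%N].
Proof.
move=> V hl bar m [i0 Hi0] Hmin C.
have bar' : barrier s M lam := bar.
have key : forall x, (x \in C) = (m <= x <= M)%N by [].
have V' := V; case: V' => V1 V2 V3 V4 V5.
have h99 : (M + lam <= 99)%N.
  have [b [bs _]] := bar (M + lam) ltac:(apply/andP; split => //; lia).
  have [/andP[_ c1] _ _] := V1 _ bs.
  have : (M + lam) \in entrances s by apply/mapP; exists (M + lam, b).
  move: V5 => /andP[n100 _] e.
  have ne : (M + lam != 100)%N by apply/negP => /eqP E; rewrite -E e in n100.
  move: c1 ne => /=; lia.
have [_ m1M] := mseq1_prop hl bar'.
have mM : (m <= M)%N := leq_trans (Hmin 1%N) m1M.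
have mex : m \in exits s.
  case: i0 Hi0 => [|i] E; last by rewrite -E; exact: mseq_exit.
  by rewrite -E /mseq /= in mM; lia.
have mnent : m \notin entrances s by apply/negP => /V3; rewrite mex.
have m1 : (1 <= m)%N.
  by case/mapP: mex => c cs ->; have [_ /andP[]] := V1 _ cs.
have cov : forall j b, (j, b) \in s -> (b < j)%N -> (m < j <= M + lam)%N -> (m <= b)%N.
  move=> j b js bj /andP[mj jh].
  have e1 : mseq s M lam i0.+1 = m.
    by apply/eqP; rewrite eqn_leq Hmin -Hi0 mseq_dec.
  apply: leq_trans (Hmin i0.+2) _; apply: (@mcover _ _ _ i0 V hl bar' _ _ js bj).
  by rewrite e1 mj jh.
split.
- move=> Hnc; apply: NNPP => Hno; apply: Hnc => i j ci cj iC jC.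
  move: iC; rewrite key => /andP[mi iM].
  rewrite /trans ifF; last by apply/negbTE; lia.
  rewrite big_nat big1 // => d /andP[d1 d7].
  suff tC : target s i d \in C.
    rewrite ifF ?mulr0 //; apply/negbTE/eqP => E; by rewrite -E tC in jC.
  rewrite /target ifF; last by apply/negbTE; lia.
  have kh : (m < i + d <= M + lam)%N by clear -mi iM d1 d7 hl; lia.
  rewrite key; move: (i + d)%N kh => k kh; clear jC cj ci mi iM d1 d7.
  case: (dest_cases s k) => [[nk ->]|ks].
    case: (leqP k M) => kM; first by case/andP: kh => mk _; rewrite (ltnW mk).
    have [b [bs _]] := bar k ltac:(apply/andP; split => //; lia).
    by case/negP: nk; apply/mapP; exists (k, b).
  move: (dest s k) ks => D ks.
  have Dex : D \in exits s by apply/mapP; exists (k, D).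
  case: (ltngtP D k) => h.
  + have := cov _ _ ks h kh => mD.
    have DM := exit_le V bar' Dex ltac:(clear -h kh; lia).
    by apply/andP; split.
  + case: (leqP k M) => kM; last first.
      have [b [bs bk]] := bar k ltac:(apply/andP; split => //; lia).
      by have := uniq_ent V2 ks bs; move=> E; rewrite E ltnNge (ltnW bk) in h.
    case: (leqP D (M + lam)) => DL.
      have := exit_le V bar' Dex DL => DM; apply/andP; split => //.
      by case/andP: kh => mk _; exact: ltnW (ltn_trans mk h).
    by case: Hno; exists k, D; split => //; rewrite /C (ltnW (proj1 (andP kh))).
  + by have [_ _] := V1 _ ks; rewrite /= h eqxx.
- case=> l [L [ls lL Cl HL]] Hcl.
  have Cl' : (m <= l <= M)%N by [].
  have lm : (m < l)%N.
    rewrite ltn_neqAle; case/andP: Cl' => -> _; rewrite andbT.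
    apply/eqP => E; case/negP: mnent; rewrite E; apply/mapP; exists (l, L) => //.
  have cL : is_cell L by have [_ ? _] := V1 _ ls.
  have := Hcl l.-1 L ltac:(rewrite /is_cell; lia) cL ltac:(rewrite key; lia)
    ltac:(rewrite key; apply/negP; lia).
  rewrite /trans ifF; last by apply/negbTE; lia.
  rewrite big_nat_recl //.
  have -> : target s l.-1 1 = L.
    rewrite /target ifF; last by apply/negbTE; lia.
    rewrite (_ : (l.-1 + 1)%N = l); last by lia.
    exact: dest_eq V2 ls.
  rewrite eqxx mulr1 => /eqP; rewrite paddr_eq0.
  - by rewrite invr_eq0 (eqr_nat _ 6 0).
  - by rewrite invr_ge0 ler0n.
  - apply: sumr_ge0 => d _; apply: mulr_ge0; first by rewrite invr_ge0 ler0n.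
    by case: ifP.
Qed.
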